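(* Let $S$ be a $\Gamma$-AG$^{**}$-groupoid. Then $S$ is intra-regular if and only if every left $\Gamma$-ideal $L$ of $S$ is $\Gamma$-idempotent, i.e. $L\Gamma L=L$.
   Context: Let $S$ and $\Gamma$ be nonempty sets with a map $S\times\Gamma\times S\to S$, $(x,\gamma,y)\mapsto x\gamma y$. $S$ is a $\Gamma$-AG-groupoid if $(x\gamma y)\delta z=(z\gamma y)\delta x$ for all $x,y,z\in S$, $\gamma,\delta\in\Gamma$; it is a $\Gamma$-AG$^{**}$-groupoid if moreover $a\alpha(b\beta c)=b\alpha(a\beta c)$ for all $a,b,c\in S$, $\alpha,\beta\in\Gamma$. For subsets $A,B\subseteq S$, $A\Gamma B=\{a\gamma b: a\in A,\gamma\in\Gamma,b\in B\}$. $S$ is intra-regular if for every $a\in S$ there exist $x,y\in S$ and $\beta,\gamma,\delta\in\Gamma$ with $a=(x\beta(a\delta a))\gamma y$. A nonempty subset $L$ is a left $\Gamma$-ideal if $S\Gamma L\subseteq L$. *)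

(* Defs.v *)
Definition GammaAG {S G : Type} (op : S -> G -> S -> S) : Prop :=
  forall (x y z : S) (g d : G), op (op x g y) d z = op (op z g y) d x.

Definition GammaAGss {S G : Type} (op : S -> G -> S -> S) : Prop :=
  GammaAG op /\
  forall (a b c : S) (al be : G), op a al (op b be c) = op b al (op a be c).

Definition gprod {S G : Type} (op : S -> G -> S -> S) (A B : S -> Prop) : S -> Prop :=
  fun s => exists a g b, A a /\ B b /\ s = op a g b.

Definition subset {S : Type} (A B : S -> Prop) : Prop := forall x, A x -> B x.

Definition set_eq {S : Type} (A B : S -> Prop) : Prop := forall x, A x <-> B x.

Definition full {S : Type} : S -> Prop := fun _ => True.

Definition intra_regular {S G : Type} (op : S -> G -> S -> S) : Prop :=
  forall a : S, exists (x y : S) (be ga de : G),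
    a = op (op x be (op a de a)) ga y.

Definition left_Gamma_ideal {S G : Type} (op : S -> G -> S -> S) (L : S -> Prop) : Prop :=
  (exists l, L l) /\ subset (gprod op full L) L.

(* Main.v *)
Require Import Defs.
From Stdlib Require Import Setoid.

Theorem mainTheorem12 (S G : Type) (s0 : S) (g0 : G) (op : S -> G -> S -> S)
  (HS : GammaAGss op) :
  intra_regular op <->
  (forall L : S -> Prop, left_Gamma_ideal op L -> set_eq (gprod op L L) L).
Proof.
  destruct HS as [LI AS].
  split.
  - intros IR L [_ HL] x. split.
    + intros [p [g [q [Hp [Hq ->]]]]]. apply HL. exists p, g, q. repeat split; auto.
    + intros Hx. destruct (IR x) as [u [y [be [ga [de E]]]]].
      exists (op y be (op u de x)), ga, x. repeat split; auto.
      * apply HL. exists y, be, (op u de x). repeat split; auto.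
        apply HL. exists u, de, x. repeat split; auto.
      * rewrite E at 1. rewrite AS. rewrite LI. reflexivity.
  - intros H a.
    assert (Hfull : forall t, exists m e n, t = op m e n).
    { intro t. assert (Hf : left_Gamma_ideal op (@full S)).
      { split. exists s0; exact I. intros x _; exact I. }
      destruct (proj2 (H _ Hf t) I) as [m [e [n [_ [_ E]]]]]. eauto. }
    set (A := fun x => exists u g, x = op u g a).
    assert (Hcl : forall s g t d, A (op s g (op t d a))).
    { intros s g t d. destruct (Hfull t) as [m [e [n ->]]].
      exists (op (op s d m) e n), g.
      rewrite (LI m n a e d). rewrite AS. rewrite LI. reflexivity. }
    assert (HA : left_Gamma_ideal op A).
    { split. exists (op s0 g0 a), s0, g0; reflexivity.
      intros x [s [g [l [_ [[u [d ->]] ->]]]]]. apply Hcl. }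
    assert (Ha : A a).
    { set (L' := fun x => x = a \/ A x).
      assert (HL' : left_Gamma_ideal op L').
      { split. exists a; left; reflexivity.
        intros x [s [g [l [_ [[->|[u [d ->]]] ->]]]]].
        - right. exists s, g; reflexivity.
        - right. apply Hcl. }
      destruct (proj2 (H _ HL' a) (or_introl eq_refl)) as [p [g [q [_ [[->|[u [d ->]]] E]]]]].
      - exists p, g; exact E.
      - rewrite E. apply Hcl. }
    destruct (proj2 (H _ HA a) Ha) as [p [g [q [[s [d ->]] [[t [e ->]] E]]]]].
    assert (E2 : a = op (op a d a) g (op t e s)).
    { rewrite E at 1. rewrite AS. rewrite LI. rewrite AS. reflexivity. }
    exists (op a g (op t e s)), (op t e s), d, g, d.
    assert (E3 : op a d a = op (op a g (op t e s)) d (op a d a)).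
    { rewrite LI. rewrite <- E2. reflexivity. }
    rewrite <- E3. exact E2.
Qed.
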